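(* Let $X$ be a $T_0$-space such that for every nonempty closed set $C\neq X$ and every $K\in K(X)$, the set $\max(C)$ of maximal elements of $C$ (in the specialization order) is nonempty and ${\downarrow}(C\cap K)$ is closed. Then $X$ is $S^{\ast}$-well-filtered.
   Context: All spaces are $T_0$. The specialization order of $X$ is given by $x\le y$ iff $x\in cl(\{y\})$; ${\uparrow},{\downarrow}$ are taken with respect to it; a subset is saturated if it is an upper set in the specialization order. $K(X)$ denotes the set of all nonempty compact saturated subsets of $X$; a family in $K(X)$ is filtered if any two members contain a common member. $X$ is $S^{\ast}$-well-filtered if for every filtered family $\{K_i\mid i\in I\}\subseteq K(X)$, every $G\in K(X)$ and every nonempty open $U$, $\bigcap_{i\in I}K_i\cap G\subseteq U$ implies $K_i\cap G\subseteq U$ for some $i$. *)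

(* Defs.v *)
From HB Require Import structures.
From mathcomp Require Import all_boot all_order.
From mathcomp Require Import all_classical all_reals all_analysis.
Set Implicit Arguments. Unset Strict Implicit. Unset Printing Implicit Defensive.
Local Open Scope classical_set_scope.

Section Spec.
Context {X : topologicalType}.

Definition spec_le (x y : X) : Prop := closure [set y] x.

Definition down_set (A : set X) : set X := [set x | exists2 y, A y & spec_le x y].

Definition saturated (A : set X) : Prop :=
  forall x y, A x -> spec_le x y -> A y.

Definition KX (K : set X) : Prop := K !=set0 /\ compact K /\ saturated K.

Definition max_elems (C : set X) : set X :=
  [set x | C x /\ forall y, C y -> spec_le x y -> y = x].

Definition filtered_KX (I : Type) (K : I -> set X) : Prop :=
  inhabited I /\ (forall i, KX (K i)) /\
  (forall i j, exists k, K k `<=` K i /\ K k `<=` K j).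

Definition S_star_well_filtered : Prop :=
  forall (I : Type) (K : I -> set X), filtered_KX K ->
  forall G : set X, KX G ->
  forall U : set X, open U -> U !=set0 ->
  (\bigcap_(i in setT) K i) `&` G `<=` U ->
  exists i, K i `&` G `<=` U.

End Spec.
Arguments S_star_well_filtered : clear implicits.

(* Main.v *)
Require Import Defs.
From HB Require Import structures.
From mathcomp Require Import all_boot all_order.
From mathcomp Require Import all_classical all_reals all_analysis.
Local Open Scope classical_set_scope.

Section Helpers.
Context {X : topologicalType}.

Lemma closed_lower {A : set X} {x y} : closed A -> A y -> spec_le x y -> A x.
Proof.
move=> cA Ay xy; apply: cA; apply: (closureS _ xy) => z ->; exact: Ay.
Qed.

Lemma open_upper {U : set X} {x y} : open U -> U x -> spec_le x y -> U y.
Proof.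
move=> oU Ux xy; have [z [-> Uz]] := xy U (open_nbhs_nbhs (conj oU Ux)).
exact: Uz.
Qed.

Lemma spec_refl (x : X) : spec_le x x.
Proof. exact: subset_closure. Qed.

Lemma wf_aux
  (H : forall C : set X, closed C -> C !=set0 -> C <> setT ->
     max_elems C !=set0 /\
     (forall K : set X, KX K -> closed (down_set (C `&` K))))
  (I : Type) (K : I -> set X) : filtered_KX K ->
  forall V : set X, open V -> V !=set0 ->
  (\bigcap_(i in setT) K i) `<=` V -> exists i, K i `<=` V.
Proof.
move=> [[i0] [KK Kfil]] V oV [v Vv] capV.
apply: contrapT => nK.
have meet i : ~` V `&` K i !=set0.
  apply: contrapT => hn; apply: nK; exists i => x Kx.
  by apply: contrapT => nV; apply: hn; exists x; split.
pose P := fun O : set X => closed (~` (O `|` V)) /\ forall i, ~` (O `|` V) `&` K i !=set0.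
have := @Zorn_bigcup X P; case.
  move=> F FP Ftot.
  pose Os := \bigcup_(W in F) W.
  have FO W : F W -> open (W `|` V).
    by move=> FW; rewrite -closedC; exact: (FP W FW).1.
  have oOs : open (Os `|` V).
    have -> : Os `|` V = (\bigcup_(W in F) (W `|` V)) `|` V.
      apply/seteqP; split => x.
        case=> [[W FW Wx]|Vx]; [left; exists W => //; left|right] => //.
      case=> [[W FW [Wx|Vx]]|Vx]; [left; exists W|right|right] => //.
    by apply: openU => //; apply: bigcup_open => W FW; exact: FO.
  split; first by rewrite closedC.
  move=> i.
  have [F0|/set0P [W0 FW0]] := eqVneq F set0.
    rewrite /Os F0 bigcup_set0 set0U; exact: meet.
  pose B := fun W => ~` (W `|` V) `&` K i.
  have FF : Filter (filter_from F B).
    apply: filter_from_filter; first by exists W0.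
    move=> W1 W2 F1 F2; case: (Ftot W1 W2 F1 F2) => sub;
      [exists W2|exists W1] => // x [nx Kx]; split; split => //;
      move=> [Wx|Vx]; apply: nx; (try by right); left; exact: sub.
  have PF : ProperFilter (filter_from F B).
    by apply: filter_from_proper => W FW; exact: (FP W FW).2 i.
  have [p [Kp clp]] := (KK i).2.1 _ PF (ex_intro2 _ _ W0 FW0 (fun x (h : B W0 x) => h.2)).
  have pW W : F W -> (~` (W `|` V)) p.
    move=> FW; apply: ((FP W FW).1 p) => N Np.
    have [x [[nx _] Nx]] := clp (B W) N (ex_intro2 _ _ W FW (fun x h => h)) Np.
    by exists x.
  exists p; split => //; case=> [[W FW Wp]|Vp].
    by apply: (pW W FW); left.
  by apply: (pW W0 FW0); right.
move=> O [[cO mO] Omax].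
pose A := ~` (O `|` V).
have nVA : ~ A v by move=> /= /(_ (or_intror Vv)).
have A0 : A !=set0 by have [z [Az _]] := mO i0; exists z.
have AT : A <> setT by move=> AT; apply: nVA; rewrite AT.
have [[m [Am mmax]] Hd] := H A cO A0 AT.
have AD i : A `<=` down_set (A `&` K i).
  apply: contrapT => /existsNP [a /not_implyP [Aa nDa]].
  pose D := down_set (A `&` K i).
  have cD : closed D by apply: Hd; exact: KK.
  have DA : D `<=` A by move=> x [y [Ay _] xy]; exact: (closed_lower cO Ay xy).
  apply: (Omax (~` D)).
    split.
      by move=> x Ox Dx; have /= := DA _ Dx; apply; left.
    by move=> sub; apply: Aa; left; exact: sub a nDa.
  split.
    have -> : ~` (~` D `|` V) = D `&` ~` V by rewrite setCU setCK.
    by apply: closedI => //; exact: open_closedC.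
  move=> j; have [k [ki kj]] := Kfil i j.
  have [y [Ay Ky]] := mO k.
  exists y; split; last exact: kj.
  rewrite setCU setCK; split.
    by exists y; [split => //; exact: ki|exact: spec_refl].
  by move=> Vy; apply: Ay; right.
have mK i : K i m.
  have [y [Ay Ky] my] := AD i _ Am.
  by rewrite -(mmax y Ay my).
by apply: Am; right; apply: capV => i _; exact: mK.
Qed.
End Helpers.

Theorem mainTheorem10 (X : topologicalType) :
  kolmogorov_space X ->
  (forall C : set X, closed C -> C !=set0 -> C <> setT ->
     max_elems C !=set0 /\
     (forall K : set X, KX K -> closed (down_set (C `&` K)))) ->
  S_star_well_filtered X.
Proof.
move=> _ H I K Kf G KG U oU [u Uu] capU.
pose E := down_set (~` U `&` G).
have cE : closed E.
  have [C0|/set0P CN0] := eqVneq (~` U) set0.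
    have -> : E = set0.
      by apply/seteqP; split => x // [y [Cy _] _]; rewrite C0 in Cy.
    exact: closed0.
  have CT : ~` U <> setT.
    by move=> CT; have : (~` U) u by rewrite CT.
  exact: (H _ (open_closedC oU) CN0 CT).2 G KG.
have UE : U `<=` ~` E.
  by move=> x Ux [y [nUy _] xy]; apply: nUy; exact: (open_upper oU Ux xy).
have capV : \bigcap_(i in setT) K i `<=` ~` E.
  move=> k Kk [g [nUg Gg] kg]; apply: nUg; apply: capU; split => //.
  move=> j _; exact: ((Kf.2.1 j).2.2 k g (Kk j Logic.I) kg).
have [i KiV] := @wf_aux X H I K Kf (~` E) (closed_openC cE) (ex_intro _ u (UE u Uu)) capV.
exists i => x [Kx Gx]; apply: contrapT => nUx.
by apply: (KiV x Kx); exists x => //; exact: spec_refl.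
Qed.
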